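(* Under the standing setup, define for $x\in\mathcal{B}$ $$f_h(x):=T_x^{-1}\left[T_{P(x)}\,DP_x\,T_x^{-1}\right]^\dagger T_{P(x)}\,g(P(x)).$$ Then $DP_x f_h(x)=g(P(x))$ for every $x\in\mathcal{B}$ (i.e. $f_h$ is a lift of $g$), and $f_h(x)=g(x)$ for every $x\in\mathcal{M}$.
   Context: Standing setup: integers $0<k<n$, $r\ge1$. $\tilde{\mathcal M}$ is a compact connected $k$-dimensional $C^r$ manifold with a $C^r$ vector field $\tilde g$. $\mathcal{B}\subseteq\mathbb{R}^n$ is a connected open set with the Euclidean inner product $\langle\cdot,\cdot\rangle$ and norm $\|\cdot\|$; tangent spaces are identified with $\mathbb{R}^n$. $F:\tilde{\mathcal M}\to\mathcal{B}$ is a proper $C^r$ embedding, $\mathcal{M}:=F(\tilde{\mathcal M})$, and $g$ is the vector field on $\mathcal{M}$ with $g(F(p))=DF_p\tilde g(p)$. (A1) $G:\mathcal{B}\to\mathbb{R}^{n-k}$ is a $C^r$ submersion with $G^{-1}(0)=\mathcal{M}$. (A2) $\tilde P:\mathcal{B}\to\tilde{\mathcal M}$ is $C^r$ with $\tilde P|_{\mathcal M}=F^{-1}$; $P:=F\circ\tilde P:\mathcal{B}\to\mathcal{B}$. (A3) $\mathbb{R}^n=\ker DP_x\oplus\ker DG_x$ for every $x\in\mathcal{B}$. For a linear map $L$ between Euclidean spaces, $L^\dagger$ denotes its Moore–Penrose pseudoinverse. $T_x:=\left[I-DG_x^\dagger DG_x\right]DP_x^\dagger DP_x+DG_x^\dagger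 DG_x$, which is an invertible linear map of $\mathbb{R}^n$ for every $x\in\mathcal{B}$. *)

(* Defs.v *)
From HB Require Import structures.
From mathcomp Require Import all_boot all_order all_algebra.
From mathcomp Require Import all_classical all_reals all_analysis.
Set Implicit Arguments.
Unset Strict Implicit.
Unset Printing Implicit Defensive.
Import Order.TTheory GRing.Theory Num.Theory.
Import numFieldNormedType.Exports.
Local Open Scope classical_set_scope.
Local Open Scope ring_scope.

(* Points of R^n are column vectors 'cV[R]_n; linear maps R^n -> R^m are
   matrices 'M[R]_(m, n) acting by  A *m v. *)

Definition basis_vec (R : realType) (n : nat) (j : 'I_n) : 'cV[R]_n :=
  delta_mx j 0.

Definition Dmx (R : realType) (n m : nat) (f : 'cV[R]_n -> 'cV[R]_m)
    (x : 'cV[R]_n) : 'M[R]_(m, n) :=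
  \matrix_(i < m, j < n) ('D_(basis_vec R j) f x) i 0.

Fixpoint Cr (R : realType) (n m : nat) (r : nat) (B : set 'cV[R]_n)
    (f : 'cV[R]_n -> 'cV[R]_m) : Prop :=
  match r with
  | 0 => forall x, B x -> {for x, continuous f}
  | r'.+1 => (forall x, B x -> differentiable f x) /\
             (forall v : 'cV[R]_n, Cr r' B (fun x => 'D_v f x))
  end.

(* Moore-Penrose pseudoinverse, characterized by the four Penrose
   equations (w.r.t. the Euclidean inner product, adjoint = transpose). *)
Definition penrose (R : realType) (m n : nat) (A : 'M[R]_(m, n))
    (X : 'M[R]_(n, m)) : Prop :=
  [/\ A *m X *m A = A, X *m A *m X = X,
      (A *m X)^T = A *m X & (X *m A)^T = X *m A].

Definition mpinv (R : realType) (m n : nat) (A : 'M[R]_(m, n)) : 'M[R]_(n, m) :=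
  xget 0 [set X | penrose A X].

Definition tangent_space (R : realType) (n : nat) (M : set 'cV[R]_n)
    (y : 'cV[R]_n) : set 'cV[R]_n :=
  [set v | exists gamma : R -> 'cV[R]_n,
     [/\ gamma 0 = y, (forall t, M (gamma t)),
         derivable gamma 0 1 & 'D_1 gamma 0 = v]].

Definition Tmx (R : realType) (n k : nat)
    (P : 'cV[R]_n -> 'cV[R]_n) (G : 'cV[R]_n -> 'cV[R]_(n - k))
    (x : 'cV[R]_n) : 'M[R]_n :=
  (1%:M - mpinv (Dmx G x) *m Dmx G x) *m mpinv (Dmx P x) *m Dmx P x
  + mpinv (Dmx G x) *m Dmx G x.

Definition f_h (R : realType) (n k : nat)
    (P : 'cV[R]_n -> 'cV[R]_n) (G : 'cV[R]_n -> 'cV[R]_(n - k))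
    (g : 'cV[R]_n -> 'cV[R]_n) (x : 'cV[R]_n) : 'cV[R]_n :=
  invmx (Tmx P G x)
  *m mpinv (Tmx P G (P x) *m Dmx P x *m invmx (Tmx P G x))
  *m Tmx P G (P x) *m g (P x).

(* Main.v *)
Require Import Defs.
From HB Require Import structures.
From mathcomp Require Import all_boot all_order all_algebra.
From mathcomp Require Import all_classical all_reals all_analysis.
From mathcomp Require Import zify.
Import Order.TTheory GRing.Theory Num.Theory.
Import numFieldNormedType.Exports.
Local Open Scope classical_set_scope.
Local Open Scope ring_scope.
Lemma chain0 (R : realType) (U V W : normedModType R) (h : U -> V) (f : V -> W) x v :
  differentiable h x -> differentiable f (h x) ->
  'D_v (f \o h) x = 'D_('D_v h x) f (h x).
Proof.
move=> dh df; rewrite deriveE; last exact: differentiable_comp.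
by rewrite diff_comp // (deriveE _ dh) (deriveE _ df).
Qed.
Lemma D1 (R : realType) n m (f : 'cV[R]_n -> 'cV[R]_m) x v :
  differentiable f x -> 'D_v f x = Dmx f x *m v.
Proof.
move=> df; rewrite deriveE //.
have ev : v = \sum_j v j 0 *: basis_vec R j.
  apply/matrixP => i j; rewrite summxE (bigD1 i) //= big1 ?addr0.
    by rewrite /basis_vec !mxE eqxx (ord1 j) /= mulr1.
  by move=> l /negbTE nl; rewrite /basis_vec !mxE eq_sym nl mulr0.
rewrite {1}ev linear_sum; apply/matrixP => i j.
rewrite summxE !mxE; apply: eq_bigr => l _.
by rewrite linearZ !mxE -deriveE // (ord1 j) mulrC.
Qed.
Section LA.
Variable R : realType.

Lemma sumsq0 {n} (u : 'cV[R]_n) : u^T *m u = 0 -> u = 0.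
Proof.
move=> /matrixP /(_ 0 0); rewrite !mxE => H.
have H0 : forall i, true -> u i 0 * u i 0 = 0.
  move: H; under eq_bigr => i _ do rewrite mxE; move=> H.
  by apply: (psumr_eq0P _ H) => i _; rewrite -expr2 sqr_ge0.
apply/matrixP => i j; rewrite (ord1 j) mxE.
by have /eqP := H0 i isT; rewrite mulf_eq0 orbb => /eqP.
Qed.

Lemma sumsq0r {n} (w : 'rV[R]_n) : w *m w^T = 0 -> w = 0.
Proof.
move=> h; rewrite -[w]trmxK; rewrite (@sumsq0 _ w^T) ?trmx0 //.
by rewrite trmxK.
Qed.

Lemma free_unit {r n} (U : 'M[R]_(r, n)) : row_free U -> U *m U^T \in unitmx.
Proof.
move=> fU; rewrite -row_free_unit; apply: inj_row_free => w h.
have h2 : (w *m U) *m (w *m U)^T = 0.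
  by rewrite trmx_mul !mulmxA -(mulmxA w U) h mul0mx.
by apply/eqP; rewrite -(mulmx_free_eq0 _ fU); apply/eqP/sumsq0r.
Qed.

Lemma penrose_aux {m r n} (L : 'M[R]_(m, r)) (U : 'M[R]_(r, n)) :
  row_free L^T -> row_free U -> exists X, penrose (L *m U) X.
Proof.
move=> fL fU.
have uL := @free_unit _ _ _ fL; rewrite trmxK in uL.
have uU := @free_unit _ _ _ fU.
set Li := invmx (L^T *m L); set Ui := invmx (U *m U^T).
have hL : Li *m (L^T *m L) = 1%:M by rewrite mulVmx.
have hU : (U *m U^T) *m Ui = 1%:M by rewrite mulmxV.
have sL : Li^T = Li by rewrite /Li trmx_inv trmx_mul trmxK.
have sU : Ui^T = Ui by rewrite /Ui trmx_inv trmx_mul trmxK.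
exists (U^T *m Ui *m Li *m L^T).
have AX : (L *m U) *m (U^T *m Ui *m Li *m L^T) = L *m Li *m L^T.
  by rewrite !mulmxA -(mulmxA L U) -(mulmxA L) hU mulmx1.
have XA : (U^T *m Ui *m Li *m L^T) *m (L *m U) = U^T *m Ui *m U.
  by rewrite !mulmxA -(mulmxA _ L^T) -(mulmxA _ Li) hL mulmx1.
split.
- by rewrite AX !mulmxA -(mulmxA (L *m Li) L^T L) -(mulmxA L Li) hL mulmx1.
- by rewrite XA !mulmxA -(mulmxA (U^T *m Ui) U U^T) -(mulmxA (U^T *m Ui) (U *m U^T) Ui) hU mulmx1.
- by rewrite AX !trmx_mul trmxK sL mulmxA.
- by rewrite XA !trmx_mul trmxK sU mulmxA.
Qed.

Lemma penrose_exists m n (A : 'M[R]_(m, n)) : exists X, penrose A X.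
Proof.
have fL : row_free (col_base A)^T by rewrite /row_free mxrank_tr; exact: col_base_full.
by have := @penrose_aux _ _ _ _ _ fL (row_base_free A); rewrite mulmx_base.
Qed.

Lemma mpinvP m n (A : 'M[R]_(m, n)) : penrose A (mpinv A).
Proof. exact: (@xgetPex _ 0 [set X | penrose A X] (@penrose_exists _ _ A)). Qed.


Lemma col_unit {n} (M : 'M[R]_n) :
  (forall v : 'cV[R]_n, M *m v = 0 -> v = 0) -> M \in unitmx.
Proof.
move=> H; rewrite -unitmx_tr -row_free_unit; apply: inj_row_free => w h.
have : M *m w^T = 0 by rewrite -[M]trmxK -trmx_mul h trmx0.
by move/H => /(congr1 trmx); rewrite trmxK trmx0.
Qed.

Lemma mx_ext {m n} (M1 M2 : 'M[R]_(m, n)) :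
  (forall v : 'cV[R]_n, M1 *m v = M2 *m v) -> M1 = M2.
Proof.
move=> H; apply/matrixP => i j.
by have := H (delta_mx j 0); rewrite -!colE => /matrixP/(_ i 0); rewrite !mxE.
Qed.

Lemma proj_idem {m n} (A : 'M[R]_(m, n)) X : penrose A X ->
  (X *m A) *m (X *m A) = X *m A /\ (X *m A)^T = X *m A.
Proof.
by case=> h1 h2 h3 h4; split => //; rewrite mulmxA h2.
Qed.

Lemma T_unit {n p} (A : 'M[R]_n) (Gm : 'M[R]_(p, n)) XA XG :
  penrose A XA -> penrose Gm XG ->
  (forall v : 'cV[R]_n, exists a b : 'cV[R]_n,
         [/\ A *m a = 0, Gm *m b = 0 & v = a + b]) ->
  (forall a : 'cV[R]_n, A *m a = 0 -> Gm *m a = 0 -> a = 0) ->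
  ((1%:M - XG *m Gm) *m XA *m A + XG *m Gm) \in unitmx.
Proof.
move=> pA pG dec uniq; apply: col_unit => v Tv.
have [iA sA] := @proj_idem _ _ _ _ pA; have [iG sG] := @proj_idem _ _ _ _ pG.
case: pA => A1 _ _ _; case: pG => G1 _ _ _.
set PG := XG *m Gm in Tv iG sG *.
set PA := XA *m A in iA sA.
set a := PG *m v.
set u := XA *m A *m v.
have ab : a = - ((1%:M - PG) *m u).
  by apply/eqP; rewrite -addr_eq0 /a /u !mulmxA -mulmxDl addrC Tv.
have Pz : PG *m (1%:M - PG) = 0 by rewrite mulmxBr mulmx1 iG subrr.
have a0 : a = 0.
  apply: sumsq0; rewrite {2}ab mulmxN /a trmx_mul sG !mulmxA.
  by rewrite -(mulmxA v^T XG Gm) -/PG -(mulmxA v^T PG) Pz mulmx0 !mul0mx oppr0.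
have Gv : Gm *m v = 0 by rewrite -G1 -!mulmxA (mulmxA XG) -/PG -/a a0 mulmx0.
have u1 : PG *m u = u.
  by apply/eqP; rewrite eq_sym -subr_eq0 -{1}[u]mul1mx -mulmxBl -oppr_eq0 -ab a0.
have u2 : PA *m u = u by rewrite /u -/PA mulmxA iA.
have [a' [b' [Aa Gb eu]]] := dec u.
have u0 : u = 0.
  apply: sumsq0; rewrite {2}eu mulmxDr.
  have h1 : u^T *m a' = 0.
    by rewrite -{1}u2 trmx_mul sA /PA -!mulmxA Aa !mulmx0.
  have h2 : u^T *m b' = 0.
    by rewrite -{1}u1 trmx_mul sG /PG -!mulmxA Gb !mulmx0.
  by rewrite h1 h2 addr0.
have Av : A *m v = 0 by rewrite -A1 -!mulmxA (mulmxA XA) -/u u0 mulmx0.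
exact: uniq v Av Gv.
Qed.


Lemma surj_free {p n} (Gm : 'M[R]_(p, n)) :
  (forall w : 'cV[R]_p, exists v : 'cV[R]_n, Gm *m v = w) -> row_free Gm.
Proof.
move=> H; apply: inj_row_free => w h; have [v hv] := H w^T.
by apply: sumsq0r; rewrite -hv mulmxA h mul0mx.
Qed.

Lemma rankA {n p} (A : 'M[R]_n) (Gm : 'M[R]_(p, n)) :
  row_free Gm ->
  (forall v : 'cV[R]_n, exists a b : 'cV[R]_n,
         [/\ A *m a = 0, Gm *m b = 0 & v = a + b]) ->
  (forall a : 'cV[R]_n, A *m a = 0 -> Gm *m a = 0 -> a = 0) ->
  \rank A = (n - p)%N.
Proof.
move=> fG dec uniq.
set KA := kermx A^T; set KG := kermx Gm^T.
have rKA : \rank KA = (n - \rank A)%N by rewrite mxrank_ker mxrank_tr.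
have rG : \rank Gm = p by apply/eqP.
have rKG : \rank KG = (n - p)%N by rewrite mxrank_ker mxrank_tr rG.
have full : \rank (KA + KG)%MS = n.
  apply/eqP; change (row_full (KA + KG)%MS); rewrite -sub1mx; apply/row_subP => i.
  have [a [b [Aa Gb e]]] := dec (row i 1%:M)^T.
  have -> : row i 1%:M = a^T + b^T by rewrite -linearD /= -e trmxK.
  apply: addmx_sub_adds; rewrite sub_kermx -trmx_mul ?Aa ?Gb trmx0 //.
have cap : \rank (KA :&: KG)%MS = 0%N.
  apply/eqP; rewrite mxrank_eq0 -submx0; apply/row_subP => i.
  rewrite submx0; set w := row i _.
  have wA : (w <= KA)%MS := submx_trans (row_sub i _) (capmxSl KA KG).
  have wG : (w <= KG)%MS := submx_trans (row_sub i _) (capmxSr KA KG).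
  rewrite sub_kermx in wA; rewrite sub_kermx in wG.
  have : w^T = 0.
    apply: uniq.
      by apply: trmx_inj; rewrite trmx_mul trmxK trmx0; apply/eqP.
    by apply: trmx_inj; rewrite trmx_mul trmxK trmx0; apply/eqP.
  by move/(congr1 trmx); rewrite trmxK trmx0 => ->.
have := mxrank_sum_cap KA KG; rewrite full cap rKA rKG.
have := rank_leq_row A; have := rank_leq_col Gm; rewrite rG.
lia.
Qed.

Lemma range_lem {n p} (A : 'M[R]_n) (Gy : 'M[R]_(p, n)) (gv : 'cV[R]_n) :
  row_free Gy -> \rank A = (n - p)%N -> Gy *m A = 0 -> Gy *m gv = 0 ->
  exists u, gv = A *m u.
Proof.
move=> fG rA GA Gg.
set K := kermx Gy^T.
have rK : \rank K = (n - p)%N by rewrite mxrank_ker mxrank_tr (eqP fG).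
have sAK : (A^T <= K)%MS by rewrite sub_kermx -trmx_mul GA trmx0.
have := (mxrank_leqif_eq sAK).2; rewrite mxrank_tr rA rK eqxx => /esym/andP[_ sKA].
have sg : (gv^T <= K)%MS by rewrite sub_kermx -trmx_mul Gg trmx0.
have /submxP[D eD] := submx_trans sg sKA.
by exists D^T; rewrite -[gv]trmxK eD trmx_mul trmxK.
Qed.


Lemma part1_alg {n} (A T T' X : 'M[R]_n) (gv u : 'cV[R]_n) :
  T \in unitmx -> T' \in unitmx -> penrose (T' *m A *m invmx T) X ->
  gv = A *m u -> A *m (invmx T *m X *m T' *m gv) = gv.
Proof.
move=> uT uT' [C1 _ _ _] gu.
set C := T' *m A *m invmx T in C1 *.
have CT : C *m T = T' *m A by rewrite /C mulmxKV.
have Tg : T' *m gv = C *m (T *m u) by rewrite gu !mulmxA CT.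
rewrite -[LHS](mulKmx uT') -[RHS](mulKmx uT'); congr (_ *m _).
rewrite !mulmxA -/C -(mulmxA (C *m X) T' gv) Tg.
by rewrite (mulmxA (C *m X) C) C1.
Qed.

Lemma part2_alg {n p} (A : 'M[R]_n) (Gm : 'M[R]_(p, n)) XA XG X (gv u : 'cV[R]_n) :
  penrose Gm XG ->
  ((1%:M - XG *m Gm) *m XA *m A + XG *m Gm) \in unitmx ->
  A *m A = A -> Gm *m A = 0 ->
  penrose (((1%:M - XG *m Gm) *m XA *m A + XG *m Gm) *m A
           *m invmx ((1%:M - XG *m Gm) *m XA *m A + XG *m Gm)) X ->
  gv = A *m u ->
  invmx ((1%:M - XG *m Gm) *m XA *m A + XG *m Gm) *m X
   *m ((1%:M - XG *m Gm) *m XA *m A + XG *m Gm) *m gv = gv.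
Proof.
move=> pG uT AA GA pX gu.
have [iG sG] := @proj_idem _ _ _ _ pG.
set PG := XG *m Gm in uT pX iG sG *.
set T := (1%:M - PG) *m XA *m A + PG in uT pX *.
set Q := 1%:M - PG.
have QQ : Q *m Q = Q by rewrite /Q mulmxBr mulmx1 mulmxBl mul1mx iG subrr subr0.
have QP : Q *m PG = 0 by rewrite /Q mulmxBl mul1mx iG subrr.
have sQ : Q^T = Q by rewrite /Q linearB /= trmx1 sG.
have TA : T *m A = Q *m T.
  rewrite /T mulmxDl mulmxDr -!mulmxA AA GA mulmx0 addr0 -/Q.
  by rewrite QP addr0 !mulmxA QQ.
have eC : T *m A *m invmx T = Q by rewrite TA mulmxK.
rewrite eC in pX; case: pX => X1 _ _ X4.
have XQ : X *m Q = Q *m X^T by rewrite -X4 trmx_mul sQ.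
have QXQ : Q *m X^T *m Q = Q by have := congr1 trmx X1; rewrite !trmx_mul sQ mulmxA.
have Tg : T *m gv = Q *m (Q *m (T *m u)) by rewrite mulmxA QQ mulmxA -TA gu mulmxA.
have XT : X *m (T *m gv) = T *m gv.
  by rewrite Tg (mulmxA X Q) XQ (mulmxA (Q *m X^T) Q) QXQ (mulmxA Q Q) QQ.
by rewrite -!mulmxA XT mulKmx.
Qed.

End LA.

Theorem proposition5 (R : realType) (n k r : nat)
  (B M : set 'cV[R]_n)
  (P : 'cV[R]_n -> 'cV[R]_n) (G : 'cV[R]_n -> 'cV[R]_(n - k))
  (g : 'cV[R]_n -> 'cV[R]_n) :
  (0 < k)%N -> (k < n)%N -> (1 <= r)%N ->
  (* B: connected open subset of R^n *)
  open B -> connected B ->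
  (* M = F(M~): compact connected subset of B *)
  M `<=` B -> compact M -> connected M ->
  (* g: C^r tangent vector field on M *)
  (exists gext : 'cV[R]_n -> 'cV[R]_n,
      Cr r B gext /\ forall y, M y -> gext y = g y) ->
  (forall y, M y -> tangent_space M y (g y)) ->
  (* (A1) G: C^r submersion on B with G^{-1}(0) = M *)
  Cr r B G ->
  (forall x, B x -> forall w : 'cV[R]_(n - k), exists v, Dmx G x *m v = w) ->
  (forall x, B x -> (G x = 0 <-> M x)) ->
  (* (A2) P = F o P~: C^r map B -> M with P|_M = id *)
  Cr r B P ->
  (forall x, B x -> M (P x)) ->
  (forall y, M y -> P y = y) ->
  (* (A3) R^n = ker DP_x (+) ker DG_x *)
  (forall x, B x ->
     (forall v : 'cV[R]_n, exists a b : 'cV[R]_n,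
         [/\ Dmx P x *m a = 0, Dmx G x *m b = 0 & v = a + b]) /\
     (forall a : 'cV[R]_n, Dmx P x *m a = 0 -> Dmx G x *m a = 0 -> a = 0)) ->
  (forall x, B x -> Dmx P x *m f_h P G g x = g (P x)) /\
  (forall x, M x -> f_h P G g x = g x).
Proof.
move=> k0 kn r1 oB cB MB cM cnM _ tang Gr Gsurj GM Pr PM Pfix A3.
case: r r1 Gr Pr => [//|r'] _ [dG _] [dP _].
have fG : forall x, B x -> row_free (Dmx G x).
  by move=> x Bx; apply: surj_free; exact: Gsurj.
have rA : forall x, B x -> \rank (Dmx P x) = (n - (n - k))%N.
  by move=> x Bx; have [h1 h2] := A3 x Bx; apply: rankA => //; exact: fG.
have Tu : forall x, B x -> Tmx P G x \in unitmx.
  move=> x Bx; have [h1 h2] := A3 x Bx; rewrite /Tmx.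
  exact: (@T_unit _ _ _ _ _ _ _ (@mpinvP _ _ _ _) (@mpinvP _ _ _ _) h1 h2).
have GPA : forall x, B x -> Dmx G (P x) *m Dmx P x = 0.
  move=> x Bx; apply: mx_ext => v; rewrite mul0mx -mulmxA.
  have BPx : B (P x) by apply/MB/PM.
  have hP := dP x Bx; have hG := dG _ BPx.
  rewrite -(@D1 _ _ _ _ _ _ hP) -(@D1 _ _ _ _ _ _ hG) -chain0 //.
  rewrite (@near_eq_derive _ _ _ _ (cst 0)) ?derive_cst //.
  apply: (filterS _ (oB x Bx)) => y By /=.
  by apply/(GM _ _).2; [apply/MB/PM | apply/PM].
have Gg : forall y, M y -> Dmx G y *m g y = 0.
  move=> y My; have [gam [g0 Mg dgam Dg]] := tang y My.
  have dgam' : differentiable gam 0 by apply/derivable1_diffP.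
  have hG : differentiable G (gam 0) by rewrite g0; exact: dG (MB _ My).
  rewrite -Dg -(@D1 _ _ _ _ _ _ (dG _ (MB _ My))) -g0 -chain0 //.
  have -> : G \o gam = cst 0.
    by apply/funext => t /=; apply/(GM _ (MB _ (Mg t))).2.
  by rewrite derive_cst.
have App : forall x, M x -> Dmx P x *m Dmx P x = Dmx P x.
  move=> x Mx; have Bx := MB _ Mx; apply: mx_ext => v; rewrite -mulmxA.
  have hP := dP x Bx; have hP' : differentiable P (P x) by rewrite (Pfix x Mx).
  have e1 : 'D_v (P \o P) x = Dmx P x *m (Dmx P x *m v).
    by rewrite chain0 // (@D1 _ _ _ _ _ _ hP') (@D1 _ _ _ _ _ _ hP) (Pfix x Mx).
  have e2 : 'D_v (P \o P) x = 'D_v P x.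
    apply: near_eq_derive; apply: (filterS _ (oB x Bx)) => y By /=.
    by rewrite Pfix //; apply/PM.
  by rewrite -e1 e2 (@D1 _ _ _ _ _ _ hP).
split.
  move=> x Bx; have My := PM x Bx; have By := MB _ My.
  have [u gu] := @range_lem _ _ _ (Dmx P x) (Dmx G (P x)) (g (P x))
     (fG _ By) (rA x Bx) (GPA x Bx) (Gg _ My).
  rewrite /f_h; exact: (@part1_alg _ _ _ _ _ _ _ _ (Tu x Bx) (Tu _ By) (@mpinvP _ _ _ _) gu).
move=> x Mx; have Bx := MB _ Mx.
have GA := GPA x Bx; rewrite (Pfix x Mx) in GA.
have [u gu] := @range_lem _ _ _ (Dmx P x) (Dmx G x) (g x)
     (fG _ Bx) (rA x Bx) GA (Gg _ Mx).
rewrite /f_h (Pfix x Mx).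
have := Tu x Bx; rewrite /Tmx => uT.
exact: (@part2_alg _ _ _ _ _ _ _ _ _ _ (@mpinvP _ _ _ _) uT (App x Mx) GA (@mpinvP _ _ _ _) gu).
Qed.
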